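(* Let $A=(A,d,\Delta)$ be a mixed complex. There is an inclusion $\mathsf{CC}^-(\mathrm{End}_A)\hookrightarrow\mathrm{End}_{\mathsf{CC}^-(A)}$ in $\mathcal Ops^{\mathsf{MxCpx}}$, given in arity $n$ by sending $f\otimes u^r$ to the $k[u]$-multilinear map $a_1u^{i_1}\otimes\cdots\otimes a_nu^{i_n}\mapsto f(a_1,\dots,a_n)u^{r+\sum_j i_j}$.
   Context: Cohomological grading, $|u|=2$. A mixed complex is $(V,d,\Delta)$ with $(V,d)$ a cochain complex and $\Delta$ of degree $-1$, $\Delta^2=0$, $d\Delta+\Delta d=0$. $\mathcal Ops^{\mathsf{MxCpx}}$ denotes operads in mixed complexes. For a mixed complex $A$, $\mathrm{End}_A$ denotes the endomorphism operad of $(A,d)$ regarded as an operad in mixed complexes with operator $\{\Delta,f\}=\Delta\circ_1f-(-1)^{|f|}\sum_i f\circ_i\Delta$. $\mathsf{CC}^-(A):=(A\otimes k[u],d+u\Delta)$, regarded as a mixed complex with the $u$-linear extension of $\Delta$, and $\mathrm{End}_{\mathsf{CC}^-(A)}$ is its endomorphism operad as an operad in mixed complexes in the same way. For an operad in mixed complexes $(\mathcal O,\partial,\Delta)$, $\mathsf{CC}^-(\mathcal O)(n)=(\mathcal O(n)\otimes k[u],\partial+\Delta u,\Delta)$ with compositions $(a u^r)\circ_i(bu^s)=(a\circ_ib)u^{r+s}$. *)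

(* Defs.v *)
From HB Require Import structures.
From mathcomp Require Import all_boot all_order all_fingroup all_algebra.
From mathcomp Require Import functions.
Set Implicit Arguments. Unset Strict Implicit. Unset Printing Implicit Defensive.
Import Order.TTheory GRing.Theory Num.Theory.
Local Open Scope ring_scope.

Section Defs.
Variable k : fieldType.

Definition ksgn (z : int) : k := (-1) ^+ (odd `|z|%N).

(* Raw data of a (cohomologically) graded k-module with two operators.
   gdeg m v  <->  v is homogeneous of degree m.  The graded module itself is
   the span of the homogeneous elements inside the ambient module gV. *)
Record gdata : Type := GData {
  gV : lmodType k;
  gdeg : int -> gV -> Prop;
  gd : gV -> gV;
  gD : gV -> gV
}.
Arguments gdeg : clear implicits.
Arguments gd : clear implicits.
Arguments gD : clear implicits.

Definition upd {T : Type} (x : nat -> T) (j : nat) (v : T) : nat -> T :=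
  fun l => if l == j then v else x l.

Definition htup (G : gdata) (n : nat) (ds : nat -> int) (x : nat -> gV G) :=
  forall j, (j < n)%N -> gdeg G (ds j) (x j).
Arguments htup : clear implicits.

Definition is_mixed_complex (A : gdata) : Prop :=
  [/\ (forall m, gdeg A m 0) /\
      (forall m (c : k) x y, gdeg A m x -> gdeg A m y -> gdeg A m (c *: x + y)),
      (* the sum of the homogeneous components is direct *)
      (forall (s : seq int) (x : int -> gV A), uniq s ->
          (forall m, m \in s -> gdeg A m (x m)) ->
          \sum_(m <- s) x m = 0 -> forall m, m \in s -> x m = 0),
      (forall m x, gdeg A m x -> gdeg A (m + 1) (gd A x)) /\
      (forall m x, gdeg A m x -> gdeg A (m - 1) (gD A x)),
      (forall m (c : k) x y, gdeg A m x -> gdeg A m y ->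
          gd A (c *: x + y) = c *: gd A x + gd A y /\
          gD A (c *: x + y) = c *: gD A x + gD A y) &
      (forall m x, gdeg A m x ->
          [/\ gd A (gd A x) = 0, gD A (gD A x) = 0 &
              gd A (gD A x) + gD A (gd A x) = 0])].

(* An n-ary operation, given by its values on homogeneous tuples: F ds x is
   the value on the tuple x (entries x_0..x_(n-1)) of degrees ds. *)
Definition nop (V : lmodType k) := (nat -> int) -> (nat -> V) -> V.

Definition isEnd (G : gdata) (n : nat) (p : int) (F : nop (gV G)) : Prop :=
  [/\ (forall ds ds' x x', (forall j, (j < n)%N -> x j = x' j) ->
          htup G n ds x -> htup G n ds' x' -> F ds x = F ds' x'),
      (forall ds x, htup G n ds x -> gdeg G (\sum_(j < n) ds j + p) (F ds x)) &
      (forall ds x j (c : k) y, (j < n)%N -> htup G n ds x -> gdeg G (ds j) y ->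
          F ds (upd x j (c *: x j + y)) = c *: F ds x + F ds (upd x j y))].

Definition ecomp (V : lmodType k) (i m : nat) (q : int) (f g : nop V) : nop V :=
  fun ds x =>
    ksgn (q * \sum_(j < i) ds j) *:
      f (fun l => if (l < i)%N then ds l
                  else if l == i then \sum_(j < m) ds (i + j)%N + q
                  else ds (l + m - 1)%N)
        (fun l => if (l < i)%N then x l
                  else if l == i then g (fun j => ds (i + j)%N) (fun j => x (i + j)%N)
                  else x (l + m - 1)%N).

Definition eunit (V : lmodType k) : nop V := fun ds x => x 0%N.

Definition permseq {T : Type} (n : nat) (s : 'S_n) (x : nat -> T) : nat -> T :=
  fun l => match insub l with Some l' => x (s l') | None => x l end.

Definition kosz (n : nat) (s : 'S_n) (ds : nat -> int) : k :=
  \prod_(a < n) \prod_(b < n | (a < b)%N && (s^-1%g b < s^-1%g a)%N)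
     ksgn (ds a * ds b).

Definition eact (V : lmodType k) (n : nat) (s : 'S_n) (f : nop V) : nop V :=
  fun ds x => kosz s ds *: f (permseq s ds) (permseq s x).

Definition dEnd (G : gdata) (n : nat) (p : int) (f : nop (gV G)) : nop (gV G) :=
  fun ds x =>
    gd G (f ds x) - ksgn p *: \sum_(i < n)
      ksgn (\sum_(j < i) ds j) *: f (upd ds i (ds i + 1)) (upd x i (gd G (x i))).

Definition DEnd (G : gdata) (n : nat) (p : int) (f : nop (gV G)) : nop (gV G) :=
  fun ds x =>
    gD G (f ds x) - ksgn p *: \sum_(i < n)
      ksgn (\sum_(j < i) ds j) *: f (upd ds i (ds i - 1)) (upd x i (gD G (x i))).

(* CC^-(A) = (A[u], d + u Delta) with the u-linear extension of Delta;
   an element X : nat -> A stands for sum_r X_r u^r; homogeneous elements of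
   degree m are the finitely supported X with X_r of degree m - 2r. *)
Definition CC (A : gdata) : gdata :=
  @GData (nat -> gV A : lmodType k)
    (fun m X => (exists N, forall r, (N <= r)%N -> X r = 0) /\
                forall r : nat, gdeg A (m - 2 * (r : int)) (X r))
    (fun X r => gd A (X r) + (if r is r'.+1 then gD A (X r') else 0))
    (fun X r => gD A (X r)).

Definition ival (n t : nat) (I : {ffun 'I_n -> 'I_t.+1}) (j : nat) : nat :=
  oapp (fun j' : 'I_n => nat_of_ord (I j')) 0%N (insub j).

(* Phi (f u^r): a_1 u^(i_1) ... a_n u^(i_n) |-> f(a_1,..,a_n) u^(r + sum i_j),
   extended k-multilinearly (equivalently k[u]-multilinearly). *)
Definition Phi (A : gdata) (n : nat) (f : nop (gV A)) (r : nat) : nop (gV (CC A)) :=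
  fun DS X t =>
    \sum_(I : {ffun 'I_n -> 'I_t.+1} | (r + \sum_(j < n) (I j : nat))%N == t)
      f (fun j => DS j - 2 * (ival I j : int)) (fun j => X j (ival I j)).

End Defs.
Arguments htup {k}.
Arguments isEnd {k}.
Arguments dEnd {k}.
Arguments DEnd {k}.
Arguments gV {k}.
Arguments gdeg {k}.
Arguments gd {k}.
Arguments gD {k}.

(* Main.v *)
Require Import Defs.
From HB Require Import structures.
From mathcomp Require Import all_boot all_order all_fingroup all_algebra.
From mathcomp Require Import functions.
From mathcomp Require Import zify ring.
From Stdlib Require Import FunctionalExtensionality.
Set Implicit Arguments. Unset Strict Implicit. Unset Printing Implicit Defensive.
Import Order.TTheory GRing.Theory Num.Theory.
Local Open Scope ring_scope.
Section Comb.
Variable V : zmodType.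

Definition T (n B : nat) (P : pred (nat -> nat)) (h : (nat -> nat) -> V) : V :=
  \sum_(I : {ffun 'I_n -> 'I_B.+1} | P (ival I)) h (ival I).

Lemma ival_ord n B (I : {ffun 'I_n -> 'I_B.+1}) (j : 'I_n) : ival I j = I j.
Proof. by rewrite /ival valK. Qed.

Lemma ival_ge n B (I : {ffun 'I_n -> 'I_B.+1}) j : (n <= j)%N -> ival I j = 0%N.
Proof. move=> hj; rewrite /ival; case: insubP => //= j' jn ej. by move: jn; rewrite ltnNge hj. Qed.

Lemma ival_le n B (I : {ffun 'I_n -> 'I_B.+1}) j : (ival I j <= B)%N.
Proof. rewrite /ival; case: insubP => //= j' _ _; rewrite -ltnS; exact: ltn_ord. Qed.

Definition mk n B (psi : nat -> nat) : {ffun 'I_n -> 'I_B.+1} := [ffun j : 'I_n => inord (psi j)].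

Definition good n B (P : pred (nat -> nat)) (phi : nat -> nat) :=
  [/\ forall j, (n <= j)%N -> phi j = 0%N, forall j, (j < n)%N -> (phi j <= B)%N & P phi].

Lemma ival_mk n B psi : (forall j, (n <= j)%N -> psi j = 0%N) -> (forall j, (j < n)%N -> (psi j <= B)%N) ->
  ival (mk n B psi) = psi.
Proof.
move=> H1 H2; apply: functional_extensionality => j.
rewrite /ival; case: insubP => /= [j' jn <-|]; last by rewrite -leqNgt => /H1 ->.
by rewrite ffunE inordK // ltnS H2.
Qed.

Lemma mk_ival n B (I : {ffun 'I_n -> 'I_B.+1}) : mk n B (ival I) = I.
Proof. by apply/ffunP => j; rewrite ffunE ival_ord inord_val. Qed.

Lemma good_ival n B (P : pred (nat -> nat)) (I : {ffun 'I_n -> 'I_B.+1}) : P (ival I) -> good n B P (ival I).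
Proof. by split => // j; [apply: ival_ge | move=> _; apply: ival_le]. Qed.

Lemma T_reindex n B (P : pred (nat -> nat)) n' B' (P' : pred (nat -> nat)) (h : (nat -> nat) -> V) (Psi Psi' : (nat -> nat) -> (nat -> nat)) :
  (forall phi, good n B P phi -> good n' B' P' (Psi phi) /\ Psi' (Psi phi) = phi) ->
  (forall psi, good n' B' P' psi -> good n B P (Psi' psi) /\ Psi (Psi' psi) = psi) ->
  T n B P (fun phi => h (Psi phi)) = T n' B' P' h.
Proof.
move=> H1 H2; rewrite /T.
rewrite (reindex_onto (fun I => mk n' B' (Psi (ival I))) (fun I' => mk n B (Psi' (ival I')))).
  apply: eq_big => I.
    case PI: (P (ival I)).
      have [[g1 g2 g3] e] := H1 _ (good_ival PI).
      by rewrite ival_mk // g3 e mk_ival eqxx.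
    case: andP => // -[P'I /eqP eI]; exfalso.
    have G : good n' B' P' (ival (mk n' B' (Psi (ival I)))) by apply: good_ival.
    have [[g1 g2 g3] _] := H2 _ G.
    by move: PI; rewrite -eI ival_mk // g3.
  move=> PI; have [[g1 g2 g3] e] := H1 _ (good_ival PI).
  by rewrite ival_mk.
move=> I' P'I; have [[g1 g2 g3] e] := H2 _ (good_ival P'I).
by rewrite ival_mk // e mk_ival.
Qed.

End Comb.
Section Comb2.
Variable V : zmodType.

Lemma T0 B P (h : (nat -> nat) -> V) :
  T 0 B P h = if P (fun _ => 0%N) then h (fun _ => 0%N) else 0.
Proof.
have e (I : {ffun 'I_0 -> 'I_B.+1}) : ival I = fun _ => 0%N.
  by apply: functional_extensionality => j; apply: ival_ge.
rewrite /T (eq_bigl (fun _ => P (fun _ => 0%N))); last by move=> I; rewrite e.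
rewrite (eq_bigr (fun _ => h (fun _ => 0%N))); last by move=> I _; rewrite e.
case: (P _); last by rewrite big_pred0.
by rewrite sumr_const card_ffun !card_ord expn0.
Qed.

Definition cons0 (a : nat) (phi : nat -> nat) (j : nat) : nat :=
  if j is j'.+1 then phi j' else a.

Lemma TS n B P (h : (nat -> nat) -> V) :
  T n.+1 B P h = \sum_(a < B.+1) T n B (fun phi => P (cons0 a phi)) (fun phi => h (cons0 a phi)).
Proof.
rewrite /T pair_big_dep /=.
pose tl (I : {ffun 'I_n.+1 -> 'I_B.+1}) : {ffun 'I_n -> 'I_B.+1} := [ffun j => I (lift ord0 j)].
pose inv (q : 'I_B.+1 * {ffun 'I_n -> 'I_B.+1}) : {ffun 'I_n.+1 -> 'I_B.+1} :=
  [ffun j => if unlift ord0 j is Some j' then q.2 j' else q.1].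
have e (I : {ffun 'I_n.+1 -> 'I_B.+1}) : cons0 (I ord0) (ival (tl I)) = ival I.
  apply: functional_extensionality => -[|j] /=; first by rewrite -(ival_ord I ord0).
  case: (ltnP j n) => jn; last by rewrite !ival_ge.
  rewrite (ival_ord _ (Ordinal jn)) ffunE -(ival_ord I (lift ord0 (Ordinal jn))).
  by rewrite /= /bump /= add1n.
rewrite (reindex (fun I : {ffun 'I_n.+1 -> 'I_B.+1} => (I ord0, tl I))) /=.
  by apply: eq_big => I; rewrite e.
apply: onW_bij; exists inv.
  move=> I; apply/ffunP => j; rewrite ffunE; case: unliftP => [j'|] -> //=.
  by rewrite ffunE.
move=> [a J] /=; congr (_, _); first by rewrite ffunE unlift_none.
by apply/ffunP => j; rewrite !ffunE liftK.
Qed.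

End Comb2.
Section Comb3.
Variable V : zmodType.

Lemma eq_T n B (P P' : pred (nat -> nat)) (h h' : (nat -> nat) -> V) :
  (forall phi, P phi = P' phi) -> (forall phi, P phi -> h phi = h' phi) -> T n B P h = T n B P' h'.
Proof. move=> e1 e2; apply: eq_big => I; [exact: e1 | exact: e2]. Qed.

Definition ntake (n1 : nat) (phi : nat -> nat) (j : nat) : nat := if (j < n1)%N then phi j else 0%N.
Definition ndrop (n1 : nat) (phi : nat -> nat) (j : nat) : nat := phi (n1 + j)%N.

Lemma ntake0 phi : ntake 0 phi = fun _ => 0%N.
Proof. by apply: functional_extensionality. Qed.
Lemma ndrop0 phi : ndrop 0 phi = phi.
Proof. by apply: functional_extensionality => j; rewrite /ndrop add0n. Qed.
Lemma ntakeS n1 a phi : ntake n1.+1 (cons0 a phi) = cons0 a (ntake n1 phi).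
Proof. by apply: functional_extensionality => -[|j]. Qed.
Lemma ndropS n1 a phi : ndrop n1.+1 (cons0 a phi) = ndrop n1 phi.
Proof. by apply: functional_extensionality => j; rewrite /ndrop addSn. Qed.

Lemma Tconcat n1 n2 B (P1 : pred (nat -> nat)) (P2 : (nat -> nat) -> pred (nat -> nat))
   (h : (nat -> nat) -> (nat -> nat) -> V) :
  T n1 B P1 (fun phi1 => T n2 B (P2 phi1) (h phi1)) =
  T (n1 + n2) B (fun phi => P1 (ntake n1 phi) && P2 (ntake n1 phi) (ndrop n1 phi))
                (fun phi => h (ntake n1 phi) (ndrop n1 phi)).
Proof.
elim: n1 P1 P2 h => [|n1 IH] P1 P2 h.
  rewrite T0 add0n; case: (P1 _).
    by apply: eq_T => phi; rewrite ntake0 ndrop0.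
  by rewrite /T big_pred0 // => I; rewrite ntake0.
rewrite TS addSn TS; apply: eq_bigr => a _; rewrite IH.
by apply: eq_T => phi; rewrite ntakeS ndropS.
Qed.

End Comb3.
Section Alg.
Variables (k : fieldType) (A : gdata k).
Hypothesis hA : is_mixed_complex A.

Lemma deg0 m : gdeg A m 0.
Proof. by case: hA => -[]. Qed.
Lemma degL m (c : k) x y : gdeg A m x -> gdeg A m y -> gdeg A m (c *: x + y).
Proof. by case: hA => -[_ H] *; apply: H. Qed.
Lemma degD m x y : gdeg A m x -> gdeg A m y -> gdeg A m (x + y).
Proof. by move=> hx hy; have := degL 1 hx hy; rewrite scale1r. Qed.
Lemma degZ m (c : k) x : gdeg A m x -> gdeg A m (c *: x).
Proof. by move=> hx; have := degL c hx (deg0 m); rewrite addr0. Qed.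
Lemma degN m x : gdeg A m x -> gdeg A m (- x).
Proof. by move=> hx; rewrite -scaleN1r; apply: degZ. Qed.
Lemma degB m x y : gdeg A m x -> gdeg A m y -> gdeg A m (x - y).
Proof. by move=> hx hy; apply: degD => //; apply: degN. Qed.
Lemma deg_sum m (I : Type) (s : seq I) (P : pred I) (F : I -> gV A) :
  (forall i, P i -> gdeg A m (F i)) -> gdeg A m (\sum_(i <- s | P i) F i).
Proof. by move=> H; apply: big_ind => //; [apply: deg0 | apply: degD]. Qed.
Lemma deg_eq m m' x : m = m' -> gdeg A m x -> gdeg A m' x.
Proof. by move=> ->. Qed.

Lemma deg_d m x : gdeg A m x -> gdeg A (m + 1) (gd A x).
Proof. by case: hA => _ _ [H _] *; apply: H. Qed.
Lemma deg_D m x : gdeg A m x -> gdeg A (m - 1) (gD A x).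
Proof. by case: hA => _ _ [_ H] *; apply: H. Qed.

Section LinMap.
Variable L : gV A -> gV A.
Hypothesis hL : forall m (c : k) x y, gdeg A m x -> gdeg A m y -> L (c *: x + y) = c *: L x + L y.
Lemma L0 : L 0 = 0.
Proof.
have := hL 1 (deg0 0) (deg0 0); rewrite !scale1r addr0 => e.
by apply: (@addrI _ (L 0)); rewrite -e addr0.
Qed.
Lemma LD m x y : gdeg A m x -> gdeg A m y -> L (x + y) = L x + L y.
Proof. by move=> hx hy; have := hL 1 hx hy; rewrite !scale1r. Qed.
Lemma LZ m (c : k) x : gdeg A m x -> L (c *: x) = c *: L x.
Proof. by move=> hx; have := hL c hx (deg0 m); rewrite !addr0 L0 addr0. Qed.
Lemma LN m x : gdeg A m x -> L (- x) = - L x.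
Proof. by move=> hx; rewrite -scaleN1r (LZ _ hx) scaleN1r. Qed.
Lemma LB m x y : gdeg A m x -> gdeg A m y -> L (x - y) = L x - L y.
Proof. by move=> hx hy; rewrite (LD hx (degN hy)) (LN hy). Qed.
Lemma L_sum m (I : Type) (s : seq I) (P : pred I) (F : I -> gV A) :
  (forall i, P i -> gdeg A m (F i)) -> L (\sum_(i <- s | P i) F i) = \sum_(i <- s | P i) L (F i).
Proof.
move=> H; elim: s => [|a s IH]; first by rewrite !big_nil L0.
rewrite !big_cons; case: ifP => Pa //.
by rewrite (LD (H _ Pa) (deg_sum _ H)) IH.
Qed.
End LinMap.

Lemma d_lin : forall m (c : k) x y, gdeg A m x -> gdeg A m y -> gd A (c *: x + y) = c *: gd A x + gd A y.
Proof. by case: hA => _ _ _ H _ m c x y hx hy; case: (H _ c _ _ hx hy). Qed.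
Lemma D_lin : forall m (c : k) x y, gdeg A m x -> gdeg A m y -> gD A (c *: x + y) = c *: gD A x + gD A y.
Proof. by case: hA => _ _ _ H _ m c x y hx hy; case: (H _ c _ _ hx hy). Qed.


Lemma upd_upd {X : Type} (x : nat -> X) j a b : upd (upd x j a) j b = upd x j b.
Proof. by apply: functional_extensionality => l; rewrite /upd; case: eqP. Qed.
Lemma upd_eq {X : Type} (x : nat -> X) j a : upd x j a j = a.
Proof. by rewrite /upd eqxx. Qed.
Lemma upd_neq {X : Type} (x : nat -> X) j a l : l != j -> upd x j a l = x l.
Proof. by rewrite /upd => /negbTE ->. Qed.

Lemma htup_upd n ds x j v : htup A n ds x -> gdeg A (ds j) v -> htup A n ds (upd x j v).
Proof. by move=> hx hv l ln; rewrite /upd; case: eqP => [->|_] //; apply: hx. Qed.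
Lemma htup_upd2 n ds x j m v : htup A n ds x -> gdeg A m v -> htup A n (upd ds j m) (upd x j v).
Proof. by move=> hx hv l ln; rewrite /upd; case: eqP => [_|_] //; apply: hx. Qed.

Section FL.
Variables (n : nat) (p : int) (f : nop (gV A)).
Hypothesis hf : isEnd A n p f.

Lemma fcong ds ds' x x' : (forall j, (j < n)%N -> x j = x' j) -> htup A n ds x -> htup A n ds' x' ->
  f ds x = f ds' x'.
Proof. by case: hf => H _ _; apply: H. Qed.
Lemma fdeg ds x : htup A n ds x -> gdeg A (\sum_(j < n) ds j + p) (f ds x).
Proof. by case: hf => _ H _; apply: H. Qed.
Lemma flin ds x j (c : k) y : (j < n)%N -> htup A n ds x -> gdeg A (ds j) y ->
  f ds (upd x j (c *: x j + y)) = c *: f ds x + f ds (upd x j y).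
Proof. by case: hf => _ _ H; apply: H. Qed.

Lemma fzero ds x j : (j < n)%N -> htup A n ds x -> x j = 0 -> f ds x = 0.
Proof.
move=> jn hx xj0.
have := flin 1 jn hx (deg0 (ds j)); rewrite xj0 scaler0 addr0 scale1r.
have hu : htup A n ds (upd x j 0) by apply: htup_upd => //; apply: deg0.
have -> : f ds (upd x j 0) = f ds x.
  by apply: fcong => // l _; rewrite /upd; case: eqP => // ->.
by move=> e; apply: (@addrI _ (f ds x)); rewrite -e addr0.
Qed.

Lemma fadd ds x j a b : (j < n)%N -> htup A n ds x -> gdeg A (ds j) a -> gdeg A (ds j) b ->
  f ds (upd x j (a + b)) = f ds (upd x j a) + f ds (upd x j b).
Proof.
move=> jn hx ha hb.
have := flin 1 jn (htup_upd hx ha) hb; rewrite !upd_upd upd_eq !scale1r //.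
Qed.

Lemma fsum ds x j (I : Type) (s : seq I) (F : I -> gV A) : (j < n)%N -> htup A n ds x ->
  (forall i, gdeg A (ds j) (F i)) ->
  f ds (upd x j (\sum_(i <- s) F i)) = \sum_(i <- s) f ds (upd x j (F i)).
Proof.
move=> jn hx hF; elim: s => [|a s IH].
  by rewrite !big_nil; apply: (fzero jn); [apply: htup_upd => //; apply: deg0 | rewrite upd_eq].
rewrite !big_cons (fadd jn hx (hF a)) ?IH //.
by apply: deg_sum.
Qed.

Lemma fT ds x j m B (P : pred (nat -> nat)) h : (j < n)%N -> htup A n ds x ->
  (forall phi, P phi -> gdeg A (ds j) (h phi)) ->
  f ds (upd x j (T m B P h)) = T m B P (fun phi => f ds (upd x j (h phi))).
Proof.
move=> jn hx hh; rewrite /T big_mkcond (@fsum ds x j _ _ _ jn hx).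
  rewrite [RHS]big_mkcond; apply: eq_bigr => I _; case: ifP => // _.
  by apply: (fzero jn); [apply: htup_upd => //; apply: deg0 | rewrite upd_eq].
by move=> I; case: ifP => PI; [apply: hh | apply: deg0].
Qed.

End FL.
Lemma PoszS (I : Type) (s : seq I) (P : pred I) (F : I -> nat) :
  Posz (\sum_(i <- s | P i) F i)%N = \sum_(i <- s | P i) Posz (F i).
Proof. by rewrite (big_morph Posz PoszD (erefl (Posz 0))). Qed.

Lemma PhiT n (f : nop (gV A)) r (DS : nat -> int) (X : nat -> gV (CC A)) t : Phi n f r DS X t =
  T n t (fun phi => (r + \sum_(j < n) phi j)%N == t)
    (fun phi => f (fun j => DS j - 2 * (phi j : int)) (fun j => X j (phi j))).
Proof.
rewrite /Phi /T; apply: eq_bigl => I.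
by rewrite (eq_bigr (fun j : 'I_n => ival I j)) // => j _; rewrite ival_ord.
Qed.

Lemma T_lin n B P (c : k) (h1 h2 : (nat -> nat) -> gV A) :
  T n B P (fun phi => c *: h1 phi + h2 phi) = c *: T n B P h1 + T n B P h2.
Proof. by rewrite /T big_split /= scaler_sumr. Qed.

Lemma degT m n B (P : pred (nat -> nat)) h : (forall phi, P phi -> gdeg A m (h phi)) -> gdeg A m (T n B P h).
Proof. by move=> H; apply: deg_sum => I; apply: H. Qed.

Lemma htupCC n DS X (phi : nat -> nat) : htup (CC A) n DS X ->
  htup A n (fun j => DS j - 2 * (phi j : int)) (fun j => X j (phi j)).
Proof. by move=> H j jn; case: (H j jn) => _; apply. Qed.

Lemma unifN n (X : nat -> gV (CC A)) :
  (forall j, (j < n)%N -> exists N, forall t, (N <= t)%N -> X j t = 0) ->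
  exists N, forall j, (j < n)%N -> forall t, (N <= t)%N -> X j t = 0.
Proof.
elim: n => [|n IH] H; first by exists 0%N.
have [N1 H1] := IH (fun j jn => H j (ltnW jn)).
have [N2 H2] := H n (ltnSn n).
exists (maxn N1 N2) => j; rewrite ltnS leq_eqVlt => /orP [/eqP ->|jn] t.
  by rewrite geq_max => /andP [_]; apply: H2.
by rewrite geq_max => /andP [+ _]; apply: H1.
Qed.

Lemma Phi_isEnd n p (f : nop (gV A)) (r : nat) : isEnd A n p f -> isEnd (CC A) n (p + 2 * (r : int)) (Phi n f r).
Proof.
move=> hf; split.
- move=> DS DS' X X' eX hX hX'; apply: functional_extensionality => t.
  rewrite !PhiT; apply: eq_T => // phi _.
  apply: (fcong hf); [by move=> j jn; rewrite eX | exact: htupCC | exact: htupCC].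
- move=> DS X hX; split.
    have [N0 HN0] : exists N, forall j, (j < n)%N -> forall t, (N <= t)%N -> X j t = 0.
      by apply: unifN => j jn; case: (hX j jn) => -[N HN] _; exists N.
    exists (r + n * N0).+1 => t Ht; rewrite PhiT /T big1 // => I /eqP PI.
    set phi := ival I.
    case: (boolP [exists j : 'I_n, N0 <= phi j]%N) => [/existsP [j Hj]|].
      apply: (fzero hf (ltn_ord j) (htupCC _ hX)); apply: HN0 => //.
    rewrite negb_exists => /forallP Hall.
    have : (\sum_(j < n) phi j <= \sum_(j < n) N0)%N.
      by apply: leq_sum => j _; have := Hall j; rewrite -ltnNge => /ltnW.
    rewrite sum_nat_const card_ord => Hle.
    exfalso; move: Ht Hle; rewrite -PI /phi; lia.
  move=> t; rewrite PhiT; apply: degT => phi /eqP Pphi.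
  apply: deg_eq (fdeg hf (htupCC _ hX)).
  rewrite sumrB -mulr_sumr -PoszS -Pphi PoszD.
  set S1 := \sum_(i < n) DS i; set S2 := Posz (\sum_(i < n) phi i)%N.
  lia.
- move=> DS X j c Y jn hX hY; apply: functional_extensionality => t.
  rewrite (_ : (c *: _ + _) t = c *: Phi n f r DS X t + Phi n f r DS (upd X j Y) t) // !PhiT -T_lin; apply: eq_T => // phi _.
  have hx := htupCC phi hX.
  have hy : gdeg A (DS j - 2 * (phi j : int)) (Y (phi j)) by case: hY.
  set x := fun l => X l (phi l).
  have e1 : (fun l => upd X j (c *: X j + Y) l (phi l)) = upd x j (c *: x j + Y (phi j)).
    by apply: functional_extensionality => l; rewrite /upd /x; case: eqP => // ->.
  have e2 : (fun l => upd X j Y l (phi l)) = upd x j (Y (phi j)).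
    by apply: functional_extensionality => l; rewrite /upd /x; case: eqP => // ->.
  by rewrite e1 e2 (flin hf _ jn hx hy).
Qed.
Lemma fun_sum (I : Type) (s : seq I) (P : pred I) (F : I -> gV (CC A)) t :
  (\sum_(i <- s | P i) F i) t = \sum_(i <- s | P i) F i t.
Proof.
elim: s => [|a s IH]; first by rewrite !big_nil.
by rewrite !big_cons; case: ifP => // _; rewrite -IH.
Qed.

Section Const.
Variables (n : nat) (ds : nat -> int) (x : nat -> gV A).
Hypothesis hx : htup A n ds x.
Definition Xc : nat -> gV (CC A) := fun j t => if t == 0%N then x j else 0.

Lemma htupXc : htup (CC A) n ds Xc.
Proof.
move=> j jn; split; first by exists 1%N => -[|t].
move=> [|t] /=; first by rewrite mulr0 subr0; apply: hx.
exact: deg0.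
Qed.

Lemma Phi_const p (f : nop (gV A)) r t : isEnd A n p f ->
  Phi n f r ds Xc t = if t == r then f ds x else 0.
Proof.
move=> hf; rewrite PhiT /T.
have Z (I : {ffun 'I_n -> 'I_t.+1}) : [exists j : 'I_n, 0 < I j]%N ->
    f (fun j => ds j - 2 * (ival I j : int)) (fun j => Xc j (ival I j)) = 0.
  move=> /existsP [j Hj]; apply: (fzero hf (ltn_ord j) (htupCC _ htupXc)).
  by rewrite /Xc ival_ord; case: (I j) Hj => -[].
have E (I : {ffun 'I_n -> 'I_t.+1}) : ~~ [exists j : 'I_n, 0 < I j]%N -> ival I = fun _ => 0%N.
  rewrite negb_exists => /forallP H; apply: functional_extensionality => j.
  case: (ltnP j n) => jn; last by rewrite ival_ge.
  by have := H (Ordinal jn); rewrite (ival_ord I (Ordinal jn)) lt0n negbK => /eqP.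
case: eqP => [<-|ne].
  pose I0 : {ffun 'I_n -> 'I_t.+1} := [ffun _ => ord0].
  have nI0 : ~~ [exists j : 'I_n, 0 < I0 j]%N by rewrite negb_exists; apply/forallP => j; rewrite ffunE.
  rewrite (bigD1 I0) /=; last by rewrite (E _ nI0) big1 ?addn0.
  rewrite big1 ?addr0.
    rewrite (E _ nI0); apply: (fcong hf) => //; last first.
      by move=> j jn; rewrite /Xc /= mulr0 subr0; apply: hx.
  move=> I /andP [_ nI]; apply: Z; apply: contraR nI => /E eI.
  by apply/eqP/ffunP => j; apply: val_inj; rewrite ffunE /= -ival_ord eI.
rewrite big1 // => I /eqP PI; apply: Z; apply: contraT => /E eI; exfalso; apply: ne.
by rewrite -PI eI big1 ?addn0.
Qed.
End Const.

Lemma Phi_inj n (s : seq (int * nat)) (f : int -> nat -> nop (gV A)) :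
  uniq s -> (forall pr, pr \in s -> isEnd A n pr.1 (f pr.1 pr.2)) ->
  (forall DS X, htup (CC A) n DS X -> \sum_(pr <- s) Phi n (f pr.1 pr.2) pr.2 DS X = 0) ->
  forall pr, pr \in s -> forall ds x, htup A n ds x -> f pr.1 pr.2 ds x = 0.
Proof.
move=> us hs H [p0 r0] pin ds x hx /=.
have := congr1 (fun F => F r0) (H _ _ (htupXc hx)); rewrite fun_sum.
rewrite big_seq (eq_bigr (fun pr => if pr.2 == r0 then f pr.1 pr.2 ds x else 0)); last first.
  by move=> pr prs; rewrite (Phi_const hx _ _ (hs _ prs)) eq_sym.
rewrite -big_seq -big_mkcond /= (_ : (0 : gV (CC A)) r0 = 0) // => H0.
set D := \sum_(j < n) ds j.
set s' := [seq pr.1 + D | pr <- [seq pr <- s | pr.2 == r0]].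
pose y m := f (m - D) r0 ds x.
have Hdir : forall (s : seq int) (x : int -> gV A), uniq s ->
    (forall m, m \in s -> gdeg A m (x m)) -> \sum_(m <- s) x m = 0 -> forall m, m \in s -> x m = 0.
  by case: hA.
rewrite -(_ : y (p0 + D) = f p0 r0 ds x); last by rewrite /y addrK.
apply: (Hdir s' y).
- rewrite map_inj_in_uniq ?filter_uniq // => -[a b] [a' b'].
  by rewrite !mem_filter /= => /andP [/eqP -> _] /andP [/eqP -> _] /addIr ->.
- move=> m /mapP [[a b]]; rewrite mem_filter /= => /andP [/eqP eb abs] ->.
  rewrite /y addrK; move: abs; rewrite eb => abs.
  by apply: deg_eq (fdeg (hs _ abs) hx); rewrite addrC.
- rewrite big_map big_filter -[RHS]H0; apply: eq_bigr => -[a b] /= /eqP ->.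
  by rewrite /y addrK.
- by apply/mapP; exists (p0, r0) => //; rewrite mem_filter /= eqxx.
Qed.
Lemma ksgnE (z : int) : ksgn k z = (-1) ^ z.
Proof.
rewrite /ksgn; case: z => n /=; first by rewrite signr_odd.
have -> : (-1) ^ Negz n = ((-1) ^+ odd n.+1)^-1 :> k by rewrite signr_odd.
by rewrite /=; case: odd; rewrite /= ?invr1 ?invrN1.
Qed.
Lemma ksgnD (a b : int) : ksgn k (a + b) = ksgn k a * ksgn k b.
Proof. by rewrite !ksgnE expfzDr // oppr_eq0 oner_neq0. Qed.
Lemma ksgn2 (b : int) : ksgn k (2 * b) = 1.
Proof. by rewrite ksgnE -exprz_exp (_ : (-1) ^ 2 = 1 :> k) ?exp1rz // (_ : (-1) ^ 2 = (-1) ^+ 2 :> k) // -signr_odd. Qed.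
Lemma ksgn_add2 (a b : int) : ksgn k (a + 2 * b) = ksgn k a.
Proof. by rewrite ksgnD ksgn2 mulr1. Qed.
Lemma ksgn_eq (a b : int) c : a = b + 2 * c -> ksgn k a = ksgn k b.
Proof. by move=> ->; rewrite ksgn_add2. Qed.
Lemma evB (F G : gV (CC A)) t : (F - G) t = F t - G t. Proof. by []. Qed.
Lemma evD (F G : gV (CC A)) t : (F + G) t = F t + G t. Proof. by []. Qed.
Lemma evZ (c : k) (F : gV (CC A)) t : (c *: F) t = c *: F t. Proof. by []. Qed.

Lemma T_add n B P (h1 h2 : (nat -> nat) -> gV A) :
  T n B P (fun phi => h1 phi + h2 phi) = T n B P h1 + T n B P h2.
Proof. by rewrite /T big_split. Qed.
Lemma T_sub n B P (h1 h2 : (nat -> nat) -> gV A) :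
  T n B P (fun phi => h1 phi - h2 phi) = T n B P h1 - T n B P h2.
Proof. by rewrite /T sumrB. Qed.
Lemma T_scale n B P (c : k) (h : (nat -> nat) -> gV A) :
  T n B P (fun phi => c *: h phi) = c *: T n B P h.
Proof. by rewrite /T scaler_sumr. Qed.
Lemma T_sum n B P (I : Type) (s : seq I) (Q : pred I) (h : I -> (nat -> nat) -> gV A) :
  T n B P (fun phi => \sum_(i <- s | Q i) h i phi) = \sum_(i <- s | Q i) T n B P (h i).
Proof. by rewrite /T exchange_big. Qed.

Lemma sum_sub2 (i : nat) (a b : nat -> int) :
  \sum_(j < i) (a j - 2 * b j) = \sum_(j < i) a j + 2 * (- \sum_(j < i) b j).
Proof. by rewrite sumrB -mulr_sumr mulrN. Qed.

Lemma Phi_unit (DS : nat -> int) (X : nat -> gV (CC A)) :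
  Phi 1 (@eunit k (gV A)) 0 DS X = eunit DS X.
Proof.
apply: functional_extensionality => t; rewrite PhiT TS.
rewrite big_ord_recr /= big1 ?add0r.
  by rewrite T0 /= big_ord1 /= add0n eqxx /eunit.
move=> a _; rewrite T0 /= big_ord1 /= add0n.
by rewrite ifN // neq_ltn ltn_ord.
Qed.

Lemma f_termdeg n p (f : nop (gV A)) (r : nat) DS X t (phi : nat -> nat) : isEnd A n p f ->
  htup (CC A) n DS X -> (r + \sum_(j < n) phi j)%N = t ->
  gdeg A (\sum_(j < n) DS j + (p + 2 * (r : int)) - 2 * (t : int))
    (f (fun j => DS j - 2 * (phi j : int)) (fun j => X j (phi j))).
Proof.
move=> hf hX Pphi; apply: deg_eq (fdeg hf (htupCC _ hX)).
rewrite sumrB -mulr_sumr -PoszS -Pphi PoszD.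
set S1 := \sum_(i < n) DS i; set S2 := Posz (\sum_(i < n) phi i)%N.
lia.
Qed.

Lemma Phi_DEnd n p (f : nop (gV A)) (r : nat) (hf : isEnd A n p f) DS X :
  htup (CC A) n DS X ->
  Phi n (DEnd A n p f) r DS X = DEnd (CC A) n (p + 2 * (r : int)) (Phi n f r) DS X.
Proof.
move=> hX; apply: functional_extensionality => t.
rewrite /DEnd evB evZ fun_sum PhiT.
rewrite (@eq_T _ _ _ _ _ _ (fun phi => gD A (f (fun j => DS j - 2 * (phi j : int)) (fun j => X j (phi j)))
   - ksgn k p *: \sum_(i < n) ksgn k (\sum_(j < i) DS j) *:
      f (fun j => upd DS i (DS i - 1) j - 2 * (phi j : int))
        (fun j => upd X i (gD (CC A) (X i)) j (phi j))) (fun _ => erefl)); last first.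
  move=> phi _; congr (_ - _ *: _); apply: eq_bigr => i _.
  rewrite (sum_sub2 i DS (fun j => Posz (phi j))) ksgn_add2; congr (_ *: f _ _).
    apply: functional_extensionality => j; rewrite /upd; case: eqP => // ->; ring.
  by apply: functional_extensionality => j; rewrite /upd; case: eqP => // ->.
rewrite T_sub T_scale T_sum ksgn_add2; congr (_ - _ *: _).
  rewrite (_ : gD (CC A) (Phi n f r DS X) t = gD A (Phi n f r DS X t)) // PhiT /T.
  rewrite (@L_sum (gD A) D_lin (\sum_(j < n) DS j + (p + 2 * (r : int)) - 2 * (t : int))) //.
  by move=> I /eqP PI; apply: (f_termdeg hf hX PI).
apply: eq_bigr => i _; rewrite T_scale evZ PhiT //.
Qed.
Lemma sum_upd n (phi : nat -> nat) i v : (i < n)%N ->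
  (\sum_(j < n) upd phi i v j + phi i = \sum_(j < n) phi j + v)%N.
Proof.
move=> iln; rewrite (bigD1 (Ordinal iln)) // [in RHS](bigD1 (Ordinal iln)) //= upd_eq.
rewrite (eq_bigr (fun j : 'I_n => phi j)); first by lia.
move=> j nj; rewrite upd_neq //; apply: contraNneq nj => e; apply/eqP; exact: val_inj.
Qed.

Lemma le_sum n (phi : nat -> nat) j : (j < n)%N -> (phi j <= \sum_(l < n) phi l)%N.
Proof. by move=> jn; rewrite (bigD1 (Ordinal jn)) //= leq_addr. Qed.

Lemma T_restrict n B (P Q : pred (nat -> nat)) (h : (nat -> nat) -> gV A) :
  (forall phi, P phi -> ~~ Q phi -> h phi = 0) -> T n B P h = T n B (fun phi => P phi && Q phi) h.
Proof.
move=> H; rewrite /T (bigID (fun I => Q (ival I))) /= addrC big1 ?add0r //.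
by move=> I /andP [PI QI]; apply: H.
Qed.

Section FL2.
Variables (n : nat) (p : int) (f : nop (gV A)).
Hypothesis hf : isEnd A n p f.

Lemma fadd2 ds x j a b : (j < n)%N -> (forall l, (l < n)%N -> l != j -> gdeg A (ds l) (x l)) ->
  gdeg A (ds j) a -> gdeg A (ds j) b ->
  f ds (upd x j (a + b)) = f ds (upd x j a) + f ds (upd x j b).
Proof.
move=> jn hx ha hb.
have h0 : htup A n ds (upd x j 0).
  by move=> l ln; rewrite /upd; case: eqP => [->|/eqP]; [apply: deg0 | apply: hx].
by have := fadd hf jn h0 ha hb; rewrite !upd_upd.
Qed.

Lemma fzero2 ds x j : (j < n)%N -> (forall l, (l < n)%N -> l != j -> gdeg A (ds l) (x l)) ->
  f ds (upd x j 0) = 0.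
Proof.
move=> jn hx; apply: (fzero hf jn); last by rewrite upd_eq.
by move=> l ln; rewrite /upd; case: eqP => [->|/eqP]; [apply: deg0 | apply: hx].
Qed.
End FL2.

Section Dslot.
Variables (n : nat) (p : int) (f : nop (gV A)) (r : nat).
Hypothesis hf : isEnd A n p f.
Variables (DS : nat -> int) (X : nat -> gV (CC A)).
Hypothesis hX : htup (CC A) n DS X.

Definition Fd i (phi : nat -> nat) := f (fun j => upd DS i (DS i + 1) j - 2 * (phi j : int))
   (upd (fun j => X j (phi j)) i (gd A (X i (phi i)))).
Definition FD i (phi : nat -> nat) := f (fun j => upd DS i (DS i - 1) j - 2 * (phi j : int))
   (upd (fun j => X j (phi j)) i (gD A (X i (phi i)))).

Lemma hXo (phi : nat -> nat) i (dsi : int) l : (l < n)%N -> l != i ->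
  gdeg A (upd DS i dsi l - 2 * (phi l : int)) (X l (phi l)).
Proof. by move=> ln /negbTE li; rewrite /upd li; apply: (htupCC _ hX). Qed.

Lemma Phi_dslot i t : (i < n)%N ->
  Phi n f r (upd DS i (DS i + 1)) (upd X i (gd (CC A) (X i))) t =
  T n t (fun phi => (r + \sum_(j < n) phi j)%N == t) (Fd i) +
  T n t (fun phi => (r.+1 + \sum_(j < n) phi j)%N == t) (FD i).
Proof.
move=> iln; rewrite PhiT.
pose G (phi : nat -> nat) := f (fun j => upd DS i (DS i + 1) j - 2 * (phi j : int))
   (upd (fun j => X j (phi j)) i (if phi i is a.+1 then gD A (X i a) else 0)).
rewrite (@eq_T _ _ _ _ _ _ (fun phi => Fd i phi + G phi) (fun _ => erefl)); last first.
  move=> phi _; rewrite /Fd /G -(fadd2 hf iln).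
  - congr (f _ _); apply: functional_extensionality => l; rewrite /upd.
    by case: eqP => // ->.
  - by move=> l ln li; apply: hXo.
  - rewrite upd_eq; apply: deg_eq (deg_d (htupCC _ hX iln)); ring.
  - rewrite upd_eq; case: (phi i) => [|a]; first by apply: deg0.
    apply: deg_eq (deg_D (htupCC (fun _ => a) hX iln)); rewrite -[a.+1]addn1 PoszD; ring.
rewrite T_add; congr (_ + _).
rewrite (@T_restrict _ _ _ (fun phi => 0 < phi i)%N); last first.
  move=> phi _; rewrite -eqn0Ngt => /eqP e; rewrite /G e; apply: (fzero2 hf iln).
  by move=> l ln li; apply: hXo.
pose inc (phi : nat -> nat) := upd phi i (phi i).+1.
pose dec (phi : nat -> nat) := upd phi i (phi i).-1.
rewrite -(@T_reindex _ n t (fun phi => (r.+1 + \sum_(j < n) phi j)%N == t) n t _ G inc dec).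
- apply: eq_T => // phi _; rewrite /G /FD /inc upd_eq.
  congr (f _ _); apply: functional_extensionality => l; rewrite /upd; case: eqP => // ->.
  lia.
- move=> phi [g1 g2 /eqP g3]; have su := sum_upd phi (phi i).+1 iln.
  split; last by rewrite /dec /inc upd_upd upd_eq /=; apply: functional_extensionality => l; rewrite /upd; case: eqP => // ->.
  split.
  + by move=> j jn; rewrite /inc upd_neq ?g1 //; apply: contraTneq jn => ->; rewrite -ltnNge.
  + move=> j jn; apply: leq_trans (le_sum _ jn) _; rewrite /inc /dec; lia.
  + rewrite /inc upd_eq andbT; apply/eqP; move: su; rewrite /inc; lia.
- move=> psi [g1 g2 /andP [/eqP g3 g4]]; have su := sum_upd psi (psi i).-1 iln.
  split; last first.
    rewrite /dec /inc upd_upd upd_eq prednK //.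
    by apply: functional_extensionality => l; rewrite /upd; case: eqP => // ->.
  split.
  + by move=> j jn; rewrite /dec upd_neq ?g1 //; apply: contraTneq jn => ->; rewrite -ltnNge.
  + move=> j jn; apply: leq_trans (le_sum _ jn) _; rewrite /inc /dec; lia.
  + apply/eqP; move: su; rewrite /dec; lia.
Qed.
End Dslot.
Lemma T_bnd n B B' (P P' : pred (nat -> nat)) (h : (nat -> nat) -> gV A) :
  (forall phi, P phi = P' phi) -> (forall phi, P phi -> (\sum_(j < n) phi j <= B)%N) ->
  (forall phi, P phi -> (\sum_(j < n) phi j <= B')%N) -> T n B P h = T n B' P' h.
Proof.
move=> eP h1 h2; have -> : T n B P h = T n B P (fun phi => h (id phi)) by [].
apply: T_reindex => phi [g1 g2 g3]; (split; last by []); split => //.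
- by move=> j jn; apply: leq_trans (le_sum _ jn) (h2 _ g3).
- by rewrite -eP.
- by move=> j jn; apply: leq_trans (le_sum _ jn) (h1 _ _); rewrite eP.
- by rewrite eP.
Qed.

Lemma T_sumZ n B P m (c : 'I_m -> k) (h : 'I_m -> (nat -> nat) -> gV A) :
  T n B P (fun phi => \sum_(i < m) c i *: h i phi) = \sum_(i < m) c i *: T n B P (h i).
Proof. by rewrite T_sum; apply: eq_bigr => i _; rewrite T_scale. Qed.

Lemma T_L (L : gV A -> gV A) (hL : forall m (c : k) x y, gdeg A m x -> gdeg A m y -> L (c *: x + y) = c *: L x + L y)
  m n B (P : pred (nat -> nat)) h : (forall phi, P phi -> gdeg A m (h phi)) ->
  L (T n B P h) = T n B P (fun phi => L (h phi)).
Proof. by move=> H; rewrite /T (L_sum hL (m := m)) // => I; apply: H. Qed.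

Lemma Phi_dEnd n p (f : nop (gV A)) (r : nat) (hf : isEnd A n p f) DS X :
  htup (CC A) n DS X ->
  Phi n (dEnd A n p f) r DS X + Phi n (DEnd A n p f) r.+1 DS X =
  dEnd (CC A) n (p + 2 * (r : int)) (Phi n f r) DS X.
Proof.
move=> hX; apply: functional_extensionality => t.
rewrite evD /dEnd evB evZ fun_sum !PhiT.
rewrite [X in X + _ = _](@eq_T _ _ _ _ _ _ (fun phi => gd A (f (fun j => DS j - 2 * (phi j : int)) (fun j => X j (phi j)))
   - ksgn k p *: \sum_(i < n) ksgn k (\sum_(j < i) DS j) *: Fd f DS X i phi) (fun _ => erefl)); last first.
  move=> phi _; congr (_ - _ *: _); apply/eq_bigr => i _; rewrite /Fd.
  rewrite (sum_sub2 i DS (fun j => Posz (phi j))) ksgn_add2; congr (_ *: f _ _).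
  apply: functional_extensionality => j; rewrite /upd; case: eqP => // ->; ring.
rewrite [X in _ + X = _](@eq_T _ _ _ _ _ _ (fun phi => gD A (f (fun j => DS j - 2 * (phi j : int)) (fun j => X j (phi j)))
   - ksgn k p *: \sum_(i < n) ksgn k (\sum_(j < i) DS j) *: FD f DS X i phi) (fun _ => erefl)); last first.
  move=> phi _; congr (_ - _ *: _); apply/eq_bigr => i _; rewrite /FD.
  rewrite (sum_sub2 i DS (fun j => Posz (phi j))) ksgn_add2; congr (_ *: f _ _).
  apply: functional_extensionality => j; rewrite /upd; case: eqP => // ->; ring.
rewrite !T_sub !T_scale !T_sumZ ksgn_add2.
rewrite [in RHS](eq_bigr (fun i : 'I_n => ksgn k (\sum_(j < i) DS j) *:
   (T n t (fun phi => (r + \sum_(j < n) phi j)%N == t) (Fd f DS X i) +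
    T n t (fun phi => (r.+1 + \sum_(j < n) phi j)%N == t) (FD f DS X i)))); last first.
  by move=> i _; rewrite evZ (Phi_dslot r hf hX _ (ltn_ord i)).
rewrite [in RHS](eq_bigr (fun i : 'I_n => ksgn k (\sum_(j < i) DS j) *: T n t (fun phi => (r + \sum_(j < n) phi j)%N == t) (Fd f DS X i) + ksgn k (\sum_(j < i) DS j) *: T n t (fun phi => (r.+1 + \sum_(j < n) phi j)%N == t) (FD f DS X i))); last by move=> i _; rewrite scalerDr.
rewrite big_split scalerDr opprD addrACA; congr (_ + _).
rewrite (_ : gd (CC A) (Phi n f r DS X) t = gd A (Phi n f r DS X t) +
   (if t is t'.+1 then gD A (Phi n f r DS X t') else 0)) //.
congr (_ + _).
  rewrite PhiT (@T_L (gd A) d_lin (\sum_(j < n) DS j + (p + 2 * (r : int)) - 2 * (t : int))) //.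
  by move=> phi /eqP PI; apply: (f_termdeg hf hX PI).
case: t => [|t]; first by rewrite /T big_pred0 // => I; rewrite addSn.
rewrite PhiT (@T_L (gD A) D_lin (\sum_(j < n) DS j + (p + 2 * (r : int)) - 2 * (t : int))); last first.
  by move=> phi /eqP PI; apply: (f_termdeg hf hX PI).
apply: T_bnd.
- by move=> phi; rewrite addSn eqSS.
- by move=> phi /eqP; lia.
- by move=> phi /eqP; lia.
Qed.
Lemma kosz_shift n (sg : 'S_n) (DS : nat -> int) (phi : nat -> nat) :
  kosz k sg (fun j => DS j - 2 * (phi j : int)) = kosz k sg DS.
Proof.
apply: eq_bigr => a _; apply: eq_bigr => b _.
have -> : (DS a - 2 * (phi a : int)) * (DS b - 2 * (phi b : int)) = DS a * DS b + 2 * (- (DS a * (phi b : int)) - (phi a : int) * DS b + 2 * ((phi a : int) * (phi b : int))) by ring.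
by rewrite ksgn_add2.
Qed.

Lemma permseq_ord n (sg : 'S_n) {X : Type} (x : nat -> X) (j : 'I_n) : permseq sg x j = x (sg j).
Proof. by rewrite /permseq valK. Qed.
Lemma permseq_ge n (sg : 'S_n) {X : Type} (x : nat -> X) j : (n <= j)%N -> permseq sg x j = x j.
Proof. by move=> nj; rewrite /permseq; case: insubP => //= j' jn; rewrite ltnNge nj in jn. Qed.

Lemma permseqK n (sg : 'S_n) (phi : nat -> nat) : permseq sg^-1 (permseq sg phi) = phi.
Proof.
apply: functional_extensionality => l; case: (ltnP l n) => ln.
  by rewrite (permseq_ord _ _ (Ordinal ln)) permseq_ord permKV.
by rewrite !permseq_ge.
Qed.

Lemma good_perm n (sg : 'S_n) B r t (phi : nat -> nat) :
  good n B (fun phi => (r + \sum_(j < n) phi j)%N == t) phi ->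
  good n B (fun phi => (r + \sum_(j < n) phi j)%N == t) (permseq sg phi).
Proof.
move=> [g1 g2 g3]; split.
- by move=> j nj; rewrite permseq_ge // g1.
- by move=> j jn; rewrite (permseq_ord _ _ (Ordinal jn)); apply: g2.
- rewrite (eq_bigr (fun j : 'I_n => phi (sg j))); last by move=> j _; rewrite permseq_ord.
  have e : (\sum_(j < n) phi (sg j) = \sum_(j < n) phi j)%N by rewrite [RHS](reindex_perm sg).
  by rewrite e.
Qed.

Lemma Phi_eact n p (f : nop (gV A)) (r : nat) (sg : 'S_n) (hf : isEnd A n p f) DS X :
  htup (CC A) n DS X -> Phi n (eact sg f) r DS X = eact sg (Phi n f r) DS X.
Proof.
move=> hX; apply: functional_extensionality => t.
rewrite /eact evZ !PhiT.
pose h (psi : nat -> nat) := f (fun j => permseq sg DS j - 2 * (psi j : int))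
   (fun j => permseq sg X j (psi j)).
rewrite (@eq_T _ _ _ _ _ _ (fun phi => kosz k sg DS *: h (permseq sg phi)) (fun _ => erefl)); last first.
  move=> phi _; rewrite kosz_shift /h; congr (_ *: f _ _); apply: functional_extensionality => l;
  by rewrite /permseq; case: insubP.
rewrite T_scale; congr (_ *: _).
apply: (@T_reindex _ n t _ n t _ h (permseq sg) (permseq sg^-1)) => phi G.
- by split; [exact: good_perm | rewrite permseqK].
- split; first exact: good_perm.
  by have := permseqK sg^-1 phi; rewrite invgK.
Qed.
Ltac splitif := repeat match goal with |- context [if ?b then _ else _] =>
  let H := fresh "H" in case: (boolP b) => H end.

Lemma SPL a b (F : nat -> nat) : (\sum_(l < a + b) F l = \sum_(l < a) F l + \sum_(l < b) F (a + l))%N.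
Proof. by rewrite big_split_ord. Qed.

Section CombComp.
Variables (n m s i : nat).
Hypothesis ilt : (i < n)%N.

Definition Jf (phi : nat -> nat) (l : nat) : nat :=
  if (l < i)%N then phi l else if l == i then (s + \sum_(j < m) phi (i + j))%N else phi (l + m - 1)%N.
Definition Psi (phi : nat -> nat) (l : nat) : nat :=
  if (l < n)%N then Jf phi l else if (l < n + m)%N then phi (i + (l - n))%N else 0%N.
Definition Psi' (psi : nat -> nat) (l : nat) : nat :=
  if (l < i)%N then psi l else if (l < i + m)%N then psi (n + (l - i))%N
  else if (l < n.-1 + m)%N then psi (l - m + 1)%N else 0%N.

Lemma splitN (F : nat -> nat) : (\sum_(l < n.-1 + m) F l =
  \sum_(l < i) F l + (\sum_(l < m) F (i + l) + \sum_(l < n.-1 - i) F (i + (m + l))))%N.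
Proof.
rewrite (_ : (n.-1 + m = i + (m + (n.-1 - i)))%N); last by lia.
by rewrite SPL (SPL m (n.-1 - i) (fun l => F (i + l)%N)); congr (_ + (_ + _))%N; apply: eq_bigr => l _; rewrite addnA.
Qed.

Lemma splitn (F : nat -> nat) : (\sum_(l < n) F l =
  \sum_(l < i) F l + (F i + \sum_(l < n.-1 - i) F (i + (1 + l))))%N.
Proof.
rewrite [in LHS](_ : n = i + (1 + (n.-1 - i)))%N; last by lia.
rewrite SPL (SPL 1 (n.-1 - i) (fun l => F (i + l)%N)) big_ord1 addn0; congr (_ + (_ + _))%N; apply: eq_bigr => l _; rewrite addnA.
Qed.

Lemma sumJ phi : (\sum_(l < n) Jf phi l = s + \sum_(l < n.-1 + m) phi l)%N.
Proof.
rewrite splitn splitN /Jf ltnn eqxx.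
rewrite (eq_bigr (fun l : 'I_i => phi l)); last by move=> l _; rewrite ltn_ord.
rewrite [X in (_ + (_ + X))%N](eq_bigr (fun l : 'I_(n.-1 - i) => phi (i + (m + l)))%N).
  by rewrite -!addnA addnCA.
move=> l _; splitif; try lia.
by congr phi; lia.
Qed.

Lemma sumPsi' psi : (\sum_(l < n.-1 + m) Psi' psi l + psi i = \sum_(l < n) psi l + \sum_(j < m) psi (n + j))%N.
Proof.
have e0 : (\sum_(l < i) Psi' psi l = \sum_(l < i) psi l)%N.
  by apply: eq_bigr => l _; rewrite /Psi' ltn_ord.
have e1 : (\sum_(l < m) Psi' psi (i + l) = \sum_(l < m) psi (n + l))%N.
  apply: eq_bigr => l _; have lt := ltn_ord l; rewrite /Psi'; splitif; try lia.
  by congr psi; lia.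
have e2 : (\sum_(l < n.-1 - i) Psi' psi (i + (m + l)) = \sum_(l < n.-1 - i) psi (i + (1 + l)))%N.
  apply: eq_bigr => l _; have lt := ltn_ord l; rewrite /Psi'; splitif; try lia.
  by congr psi; lia.
rewrite splitn splitN e0 e1 e2; lia.
Qed.

Lemma PsiK phi : (forall l, (n.-1 + m <= l)%N -> phi l = 0%N) -> Psi' (Psi phi) = phi.
Proof.
move=> g1; apply: functional_extensionality => l; rewrite /Psi' /Psi /Jf.
splitif; try lia; try (by congr phi; lia).
by rewrite g1 //; lia.
Qed.

Lemma Psi'K psi : (forall l, (n + m <= l)%N -> psi l = 0%N) ->
  (s + \sum_(j < m) psi (n + j))%N = psi i -> Psi (Psi' psi) = psi.
Proof.
move=> g1 g2; apply: functional_extensionality => l; rewrite /Psi' /Psi /Jf.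
splitif; try lia; try (by congr psi; lia).
- have -> : l = i by lia.
  rewrite -g2; congr (_ + _)%N; apply: eq_bigr => j _; have lt := ltn_ord j.
  by splitif; try lia; congr psi; lia.
- by rewrite g1 //; lia.
Qed.

Lemma ntake_Psi phi l : (l < n)%N -> ntake n (Psi phi) l = Jf phi l.
Proof. by move=> ln; rewrite /ntake /Psi ln. Qed.
Lemma ndrop_Psi phi j : (j < m)%N -> ndrop n (Psi phi) j = phi (i + j)%N.
Proof. by move=> jm; rewrite /ndrop /Psi; splitif; try lia; congr phi; lia. Qed.

End CombComp.
Lemma good_le n B (P : pred (nat -> nat)) phi : good n B P phi -> forall j, (phi j <= B)%N.
Proof. by move=> [g1 g2 _] j; case: (ltnP j n) => jn; [apply: g2 | rewrite g1]. Qed.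

Lemma upd_id {Y : Type} (x : nat -> Y) j : upd x j (x j) = x.
Proof. by apply: functional_extensionality => l; rewrite /upd; case: eqP => // ->. Qed.

Section Comp.
Variables (n m : nat) (p q : int) (f g : nop (gV A)) (r s i : nat).
Hypotheses (ilt : (i < n)%N) (hf : isEnd A n p f) (hg : isEnd A m q g).
Variables (DS : nat -> int) (X : nat -> gV (CC A)).
Hypothesis hX : htup (CC A) (n.-1 + m) DS X.

Definition dsR := fun l => if (l < i)%N then DS l else if l == i then \sum_(j < m) DS (i + j)%N + (q + 2 * (s : int))
   else DS (l + m - 1)%N.
Definition xR := fun l => if (l < i)%N then X l else if l == i then
   Phi m g s (fun j => DS (i + j)%N) (fun j => X (i + j)%N) else X (l + m - 1)%N.

Lemma hXi : htup (CC A) m (fun j => DS (i + j)%N) (fun j => X (i + j)%N).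
Proof. by move=> j jm; apply: hX; lia. Qed.

Lemma htupR : htup (CC A) n dsR xR.
Proof.
move=> l ln; rewrite /dsR /xR; splitif.
- by apply: hX; lia.
- by case: (Phi_isEnd s hg) => _ HH _; apply: HH; apply: hXi.
- by apply: hX; lia.
Qed.

Definition Hr (psi kap : nat -> nat) := f (fun l => dsR l - 2 * (psi l : int))
  (upd (fun l => xR l (psi l)) i (g (fun j => DS (i + j)%N - 2 * (kap j : int)) (fun j => X (i + j)%N (kap j)))).

Lemma RHS_T t : Phi n f r dsR xR t =
  T (n + m) t (fun phi => ((r + \sum_(j < n) ntake n phi j)%N == t) &&
                          ((s + \sum_(j < m) ndrop n phi j)%N == ntake n phi i))
    (fun phi => Hr (ntake n phi) (ndrop n phi)).
Proof.
rewrite PhiT.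
transitivity (T n t (fun psi => (r + \sum_(j < n) psi j)%N == t)
   (fun psi => T m t (fun kap => (s + \sum_(j < m) kap j)%N == psi i) (Hr psi))); last exact: Tconcat.
apply: eq_T => // psi /eqP Ppsi.
have psii : (psi i <= t)%N by apply: leq_trans (le_sum _ ilt) _; lia.
have E : (fun l => xR l (psi l)) = upd (fun l => xR l (psi l)) i
    (Phi m g s (fun j => DS (i + j)%N) (fun j => X (i + j)%N) (psi i)).
  by apply: functional_extensionality => l; rewrite /upd; case: eqP => // ->; rewrite /xR ltnn eqxx.
rewrite {1}E PhiT.
rewrite (@T_bnd _ (psi i) t _ (fun kap => (s + \sum_(j < m) kap j)%N == psi i)) //; last first.
- by move=> kap /eqP; lia.
- by move=> kap /eqP; lia.
rewrite (@fT n p f hf _ _ i _ _ _ _ ilt (htupCC _ htupR)) //.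
move=> kap /eqP Pk; apply: deg_eq (f_termdeg hg hXi Pk).
by rewrite /dsR ltnn eqxx.
Qed.


Lemma Phi_ecomp : Phi (n.-1 + m) (ecomp i m q f g) (r + s) DS X =
  ecomp i m (q + 2 * (s : int)) (Phi n f r) (Phi m g s) DS X.
Proof.
apply: functional_extensionality => t.
transitivity (ksgn k ((q + 2 * (s : int)) * \sum_(j < i) DS j) *: Phi n f r dsR xR t); last by [].
rewrite RHS_T PhiT.
rewrite (@eq_T _ _ _ _ _ _ (fun phi => ksgn k ((q + 2 * (s : int)) * \sum_(j < i) DS j) *:
   Hr (ntake n (Psi n m s i phi)) (ndrop n (Psi n m s i phi))) (fun _ => erefl)); last first.
  move=> phi /eqP Pphi; rewrite /ecomp; congr (_ *: _).
    rewrite (sum_sub2 i DS (fun j => Posz (phi j))).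
    set S := \sum_(j < i) DS j; set P := \sum_(j < i) Posz (phi j).
    have -> : q * (S + 2 * - P) = (q + 2 * (s : int)) * S + 2 * (- ((s : int) * S) - q * P) by ring.
    by rewrite ksgn_add2.
  set psi := ntake n (Psi n m s i phi); set kap := ndrop n (Psi n m s i phi).
  have kapE j : (j < m)%N -> kap j = phi (i + j)%N by move=> jm; rewrite /kap ndrop_Psi.
  have psiE l : (l < n)%N -> psi l = Jf m s i phi l by move=> ln; rewrite /psi ntake_Psi.
  have hphi := htupCC phi hX.
  have hphii : htup A m (fun j => DS (i + j)%N - 2 * (phi (i + j)%N : int)) (fun j => X (i + j)%N (phi (i + j)%N)).
    exact: (htupCC (fun j => phi (i + j)%N) hXi).
  apply: (fcong hf).
  - move=> l ln; rewrite /upd; case: eqP => [->|/eqP ne].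
      rewrite ltnn; apply: (fcong hg) => //; last exact: (htupCC kap hXi).
      by move=> j jm; rewrite kapE.
    rewrite /xR (negbTE ne) psiE // /Jf (negbTE ne); splitif => //; lia.
  - move=> l ln; splitif.
    + by apply: hphi; lia.
    + exact: (fdeg hg hphii).
    + by apply: hphi; lia.
  - apply: htup_upd; first exact: (htupCC psi htupR).
    have Pk : (s + \sum_(j < m) kap j)%N = psi i.
      rewrite psiE // /Jf ltnn eqxx; congr (_ + _)%N; apply: eq_bigr => j _; exact: kapE.
    by apply: deg_eq (f_termdeg hg hXi Pk); rewrite /dsR ltnn eqxx.
rewrite T_scale; congr (_ *: _).
apply: (@T_reindex _ (n.-1 + m) t _ (n + m) t _ (fun phi => Hr (ntake n phi) (ndrop n phi))
   (Psi n m s i) (Psi' n m i)).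
- move=> phi G; have [g1 g2 /eqP g3] := G; have sJ := sumJ m s ilt phi.
  split; last exact: PsiK.
  split.
  + by move=> l hl; rewrite /Psi; splitif => //; lia.
  + move=> l _; rewrite /Psi; case: ifP => ln.
      by apply: leq_trans (le_sum _ ln) _; rewrite sJ; lia.
    by case: ifP => // _; apply: (good_le G).
  + apply/andP; split; apply/eqP.
      rewrite (eq_bigr (fun j : 'I_n => Jf m s i phi j)) ?sJ; first by lia.
      by move=> j _; rewrite ntake_Psi.
    rewrite (eq_bigr (fun j : 'I_m => phi (i + j)%N)); last by move=> j _; rewrite ndrop_Psi.
    by rewrite ntake_Psi // /Jf ltnn eqxx.
- move=> psi G; have [g1 g2 /andP [/eqP h1 /eqP h2]] := G.
  have h1' : (r + \sum_(j < n) psi j)%N = t.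
    by rewrite -h1; congr (_ + _)%N; apply: eq_bigr => j _; rewrite /ntake ltn_ord.
  have h2' : (s + \sum_(j < m) psi (n + j))%N = psi i by rewrite h2 /ntake ilt.
  split; last exact: Psi'K.
  split.
  + by move=> l hl; rewrite /Psi'; splitif => //; lia.
  + by move=> l _; rewrite /Psi'; splitif => //; apply: (good_le G).
  + by apply/eqP; have := sumPsi' m ilt psi; lia.
Qed.

End Comp.
End Alg.

Theorem mainTheorem10 (k : fieldType) (A : gdata k) :
  is_mixed_complex A ->
  [/\ (
   (* Phi (f u^r) is an element of End_{CC^-(A)}(n) of degree |f| + 2r *)
   (forall (n : nat) (p : int) (f : nop (gV A)) (r : nat), isEnd A n p f -> isEnd (CC A) n (p + 2 * (r : int)) (Phi n f r)) /\
   (* injectivity on CC^-(End_A)(n) = (+)_(p,r) End_A(n)^p u^r *)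
   (forall n (s : seq (int * nat)) (f : int -> nat -> nop (gV A)),
      uniq s -> (forall pr, pr \in s -> isEnd A n pr.1 (f pr.1 pr.2)) ->
      (forall DS X, htup (CC A) n DS X ->
          \sum_(pr <- s) Phi n (f pr.1 pr.2) pr.2 DS X = 0) ->
      forall pr, pr \in s -> forall ds x, htup A n ds x -> f pr.1 pr.2 ds x = 0)),
   (* compatibility with the unit *)
   (forall DS X, htup (CC A) 1 DS X -> Phi 1 (@eunit k (gV A)) 0 DS X = eunit DS X) /\
   (* compatibility with partial compositions: (f u^r) o_i (g u^s) = (f o_i g) u^(r+s) *)
   (forall (n m : nat) (p q : int) (f g : nop (gV A)) (r s i : nat), (i < n)%N -> isEnd A n p f -> isEnd A m q g ->
      forall DS X, htup (CC A) (n.-1 + m) DS X ->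
        Phi (n.-1 + m) (ecomp i m q f g) (r + s) DS X
        = ecomp i m (q + 2 * (s : int)) (Phi n f r) (Phi m g s) DS X),
   (* equivariance for the symmetric group actions *)
   (forall (n : nat) (p : int) (f : nop (gV A)) (r : nat) (sg : 'S_n), isEnd A n p f ->
      forall DS X, htup (CC A) n DS X ->
        Phi n (eact sg f) r DS X = eact sg (Phi n f r) DS X),
   (* compatibility with the differentials: d(f u^r) = (df) u^r + {Delta,f} u^(r+1) *)
   (forall (n : nat) (p : int) (f : nop (gV A)) (r : nat), isEnd A n p f ->
      forall DS X, htup (CC A) n DS X ->
        Phi n (dEnd A n p f) r DS X + Phi n (DEnd A n p f) r.+1 DS X
        = dEnd (CC A) n (p + 2 * (r : int)) (Phi n f r) DS X) &
   (* compatibility with the operators Delta *)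
   (forall (n : nat) (p : int) (f : nop (gV A)) (r : nat), isEnd A n p f ->
      forall DS X, htup (CC A) n DS X ->
        Phi n (DEnd A n p f) r DS X
        = DEnd (CC A) n (p + 2 * (r : int)) (Phi n f r) DS X)].
Proof.
move=> hA; split.
- split; first by move=> n p f r hf; apply: Phi_isEnd.
  by move=> n s f us hs H; apply: (Phi_inj hA us hs H).
- split.
    by move=> DS X _; exact: Phi_unit.
  by move=> n m p q f g r s i ilt hf hg DS X hX; exact: (Phi_ecomp hA r s ilt hf hg hX).
- by move=> n p f r sg hf DS X hX; exact: (Phi_eact r sg hf hX).
- by move=> n p f r hf DS X hX; exact: (Phi_dEnd hA r hf hX).
- by move=> n p f r hf DS X hX; exact: (Phi_DEnd hA r hf hX).
Qed.
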